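(* Let $m$ be a positive integer, $\alpha>0$ and $\beta_1,\beta_2>0$. Then $$\int_0^{\infty}e^{-\alpha x}J_0(\beta_1\sqrt{x})J_m(\beta_2\sqrt{x})\,x^{m/2}\,dx=\frac1\alpha e^{-\beta_2^2/4\alpha}\left.\left(\frac{d}{dx}\right)^{m}\left[e^{-x}\left(\frac{x}{\alpha}\right)^{m/2}I_m\!\left(\beta_2\sqrt{\frac{x}{\alpha}}\right)\right]\right|_{x=\beta_1^2/4\alpha}$$ $$=\frac1\alpha\left(\frac{\beta_2}{2\alpha}\right)^{m}e^{-\frac{\beta_1^2+\beta_2^2}{4\alpha}}\sum_{n=0}^{m}(-1)^n\binom{m}{n}\left(\frac{\beta_1}{\beta_2}\right)^{n}I_n\!\left(\frac{\beta_1\beta_2}{2\alpha}\right).$$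
   Context: $J_k$ and $I_k$ denote the Bessel and modified Bessel functions of the first kind of integer order $k$. *)

(* Defs.v *)
From Stdlib Require Import Reals.
From Coquelicot Require Import Coquelicot.
Open Scope R_scope.

Definition BesselJ (k : nat) (x : R) : R :=
  Series (fun j : nat =>
    (-1) ^ j / (INR (Factorial.fact j) * INR (Factorial.fact (j + k))) * (x / 2) ^ (2 * j + k)).

Definition BesselI (k : nat) (x : R) : R :=
  Series (fun j : nat =>
    / (INR (Factorial.fact j) * INR (Factorial.fact (j + k))) * (x / 2) ^ (2 * j + k)).

(* Main.v *)
Require Import Defs.
From Stdlib Require Import Reals.
From Coquelicot Require Import Coquelicot.
From Stdlib Require Import Lra Lia Factorial FunctionalExtensionality.
Open Scope R_scope.

Fixpoint binom (n k : nat) : nat :=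
  match n, k with
  | _, O => 1%nat
  | O, S _ => 0%nat
  | S n', S k' => (binom n' k' + binom n' (S k'))%nat
  end.

Lemma binom_gt n k : (n < k)%nat -> binom n k = 0%nat.
Proof.
  revert k; induction n; intros k Hk; destruct k; simpl; try lia; auto.
  rewrite !IHn; lia.
Qed.

Lemma binom_nn n : binom n n = 1%nat.
Proof. induction n; simpl; auto. rewrite IHn, binom_gt; lia. Qed.

Lemma binom_0 n : binom n 0 = 1%nat.
Proof. destruct n; reflexivity. Qed.

Lemma binom_C n k : (k <= n)%nat -> INR (binom n k) = Binomial.C n k.
Proof.
  revert k; induction n; intros k Hk.
  - destruct k; [|lia]. simpl. rewrite C_n_0. reflexivity.
  - destruct k. simpl. rewrite C_n_0. reflexivity.
    simpl binom. rewrite plus_INR.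
    destruct (Nat.eq_dec k n) as [->|Hne].
    + rewrite binom_nn, binom_gt by lia. rewrite C_n_n. simpl. ring.
    + rewrite !IHn by lia. apply pascal. lia.
Qed.

Lemma fact_pos n : 0 < INR (fact n).
Proof. apply lt_0_INR. apply lt_O_fact. Qed.

Lemma binom_fact n k : (k <= n)%nat ->
  INR (binom n k) = INR (fact n) / (INR (fact k) * INR (fact (n - k))).
Proof. intros H. rewrite binom_C; auto. Qed.

Lemma binom_sym a b : binom (a + b) a = binom (a + b) b.
Proof.
  apply INR_eq. rewrite !binom_C by lia. rewrite pascal_step1 by lia.
  f_equal. lia.
Qed.

Lemma sum_ext_R (f g : nat -> R) N : (forall n, (n <= N)%nat -> f n = g n) -> sum_f_R0 f N = sum_f_R0 g N.
Proof. intros H. induction N; simpl. apply H; lia. rewrite IHN by (intros; apply H; lia). rewrite H; auto. Qed.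

Lemma sum_plus_R (f g : nat -> R) N : sum_f_R0 (fun n => f n + g n) N = sum_f_R0 f N + sum_f_R0 g N.
Proof. induction N; simpl; try rewrite IHN; ring. Qed.

Lemma sum_opp_R (f : nat -> R) N : sum_f_R0 (fun n => - f n) N = - sum_f_R0 f N.
Proof. induction N; simpl; try rewrite IHN; ring. Qed.

Lemma sum_scal_R (c : R) (f : nat -> R) N : sum_f_R0 (fun n => c * f n) N = c * sum_f_R0 f N.
Proof. induction N; simpl; try rewrite IHN; ring. Qed.

Lemma sum_shift (f : nat -> R) l : sum_f_R0 f (S l) = f O + sum_f_R0 (fun n => f (S n)) l.
Proof.
  induction l. simpl. ring.
  replace (sum_f_R0 f (S (S l))) with (sum_f_R0 f (S l) + f (S (S l))) by reflexivity.
  rewrite IHl. simpl. ring.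
Qed.

Lemma sum_zero_tail (f : nat -> R) N0 N : (N0 <= N)%nat -> (forall n, (N0 < n)%nat -> f n = 0) ->
  sum_f_R0 f N = sum_f_R0 f N0.
Proof.
  intros HN Hf. induction N. replace N0 with 0%nat by lia. auto.
  destruct (Nat.eq_dec N0 (S N)) as [->|Hne]. auto.
  simpl. rewrite IHN by lia. rewrite Hf by lia. ring.
Qed.

Lemma sum_rev (f : nat -> R) N : sum_f_R0 (fun i => f (N - i)%nat) N = sum_f_R0 f N.
Proof.
  induction N. simpl. reflexivity.
  rewrite sum_shift. replace (S N - 0)%nat with (S N) by lia.
  rewrite (sum_ext_R _ (fun i => f (N - i)%nat)) by (intros; f_equal; lia).
  rewrite IHN. simpl. ring.
Qed.

Definition AS (i : nat) (g : nat -> R) : R :=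
  sum_f_R0 (fun j => (-1) ^ j * INR (binom i j) * g j) i.

Lemma AS_succ i g : AS (S i) g = AS i g - AS i (fun j => g (S j)).
Proof.
  unfold AS. rewrite sum_shift. simpl binom.
  set (G := fun n => (-1) ^ n * INR (binom i n) * g n).
  set (h := fun n => (-1) ^ n * INR (binom i n) * g (S n)).
  rewrite (sum_ext_R _ (fun n => - h n + G (S n))).
  2:{ intros n _. unfold G, h. rewrite plus_INR. simpl. ring. }
  rewrite sum_plus_R, sum_opp_R.
  assert (Hg : sum_f_R0 G (S i) = G O + sum_f_R0 (fun n => G (S n)) i) by apply sum_shift.
  assert (Hg2 : sum_f_R0 G (S i) = sum_f_R0 G i).
  { simpl. unfold G at 2. rewrite binom_gt by lia. simpl. ring. }
  assert (Hg0 : G O = g O).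
  { unfold G. rewrite binom_0. rewrite pow_O. change (INR 1) with 1. ring. }
  try rewrite binom_0. replace ((-1) ^ 0 * INR 1) with 1 by (simpl; ring).
  lra.
Qed.

Lemma AS_plus i f g : AS i (fun j => f j + g j) = AS i f + AS i g.
Proof. unfold AS. rewrite <- sum_plus_R. apply sum_ext_R. intros; ring. Qed.

Lemma AS_const i c : AS (S i) (fun _ => c) = 0.
Proof. rewrite AS_succ. ring. Qed.

Lemma AS_binom i : forall p t,
  AS i (fun j => INR (binom (j + p) t)) =
  if (i <=? t)%nat then (-1) ^ i * INR (binom p (t - i)) else 0.
Proof.
  induction i; intros p t.
  - unfold AS. simpl. rewrite Nat.sub_0_r. destruct t; simpl; ring.
  - destruct t.
    + simpl (S i <=? 0)%nat. rewrite <- (AS_const i 1). unfold AS. apply sum_ext_R. intros. rewrite binom_0. reflexivity.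
    + rewrite AS_succ.
      assert (E : AS i (fun j => INR (binom (S j + p) (S t))) =
                  AS i (fun j => INR (binom (j + p) t)) + AS i (fun j => INR (binom (j + p) (S t)))).
      { rewrite <- AS_plus. unfold AS. apply sum_ext_R. intros. simpl. rewrite plus_INR. ring. }
      rewrite E. set (Z := AS i (fun j => INR (binom (j + p) (S t)))).
      rewrite IHi.
      replace (S i <=? S t)%nat with (i <=? t)%nat by reflexivity.
      replace (S t - S i)%nat with (t - i)%nat by lia.
      destruct (i <=? t)%nat. rewrite <- tech_pow_Rmult. ring. ring.
Qed.

Lemma sum_ge_last (f : nat -> R) n : (forall k, 0 <= f k) -> f n <= sum_f_R0 f n.
Proof.
  intros H. destruct n. simpl; lra.
  simpl. assert (forall m, 0 <= sum_f_R0 f m).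
  { induction m; simpl; auto. specialize (H (S m)); lra. }
  specialize (H0 n). lra.
Qed.



Lemma exp_ge_pow x n : 0 <= x -> x ^ n / INR (fact n) <= exp x.
Proof.
  intros Hx. eapply Rle_trans. 2: apply (exp_ge_taylor x n Hx).
  apply (sum_ge_last (fun k => x ^ k / INR (fact k))).
  intro k. apply Rmult_le_pos. apply pow_le; auto. left; apply Rinv_0_lt_compat, fact_pos.
Qed.

Lemma pow_exp_bound c x n : 0 < c -> 0 <= x -> x ^ n * exp (- (c * x)) <= INR (fact n) / c ^ n.
Proof.
  intros Hc Hx. pose proof (exp_ge_pow (c * x) n ltac:(apply Rmult_le_pos; lra)).
  pose proof (fact_pos n). pose proof (pow_lt c n Hc).
  rewrite exp_Ropp. rewrite Rpow_mult_distr in H.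
  pose proof (exp_pos (c * x)).
  apply Rmult_le_reg_r with (exp (c * x)); auto.
  apply Rmult_le_reg_r with (c ^ n); auto.
  replace (x ^ n * / exp (c * x) * exp (c * x) * c ^ n) with (c ^ n * x ^ n) by (field; lra).
  replace (INR (fact n) / c ^ n * exp (c * x) * c ^ n) with (exp (c * x) * INR (fact n)) by (field; lra).
  apply Rmult_le_reg_r with (/ INR (fact n)). apply Rinv_0_lt_compat; auto.
  replace (exp (c * x) * INR (fact n) * / INR (fact n)) with (exp (c * x)) by (field; lra).
  exact H.
Qed.

Fixpoint Aexp (a : R) (p : nat) (x : R) : R :=
  match p with
  | O => - exp (- (a * x)) / a
  | S q => - exp (- (a * x)) * x ^ (S q) / a + INR (S q) / a * Aexp a q x
  end.

Lemma Aexp_derive a p x : 0 < a -> is_derive (Aexp a p) x (exp (- (a * x)) * x ^ p).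
Proof.
  intros Ha. induction p.
  - simpl. auto_derive; auto. field. lra.
  - simpl Aexp.
    replace (exp (- (a * x)) * x ^ S p) with
      ((exp (- (a * x)) * x ^ S p - INR (S p) / a * (exp (- (a * x)) * x ^ p)) + INR (S p) / a * (exp (- (a * x)) * x ^ p)) by ring.
    apply (is_derive_plus (fun x => - exp (- (a * x)) * x ^ S p / a) (fun x => INR (S p) / a * Aexp a p x)).
    + auto_derive; auto. change (match p with 0%nat => 1 | S _ => INR p + 1 end) with (INR (S p)). simpl. field. lra.
    + apply (is_derive_scal (Aexp a p) x (INR (S p) / a)). auto.
Qed.

Lemma Aexp_0 a p : 0 < a -> Aexp a p 0 = - INR (fact p) / a ^ (S p).
Proof.
  intros Ha. induction p.
  - simpl. rewrite Rmult_0_r, Ropp_0, exp_0. field. lra.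
  - simpl Aexp. rewrite IHp. rewrite fact_simpl, mult_INR.
    replace (0 ^ S p) with 0 by (simpl; ring). simpl. field.
    split; try lra. apply pow_nonzero; lra.
Qed.

Lemma Aexp_lim a p : 0 < a -> forall eps, 0 < eps -> exists M, forall b, M < b -> Rabs (Aexp a p b) < eps.
Proof.
  intros Ha. induction p as [|p IHp]; intros eps Heps.
  - (* exp(-ab)/a <= 1/(a*a*b) *)
    exists (1 / (a * a * eps)). intros b Hb.
    assert (Hb0 : 0 < b). { eapply Rlt_trans. 2: apply Hb. apply Rdiv_lt_0_compat. lra. repeat apply Rmult_lt_0_compat; lra. }
    pose proof (pow_exp_bound a b 1 Ha (Rlt_le _ _ Hb0)). simpl in H.
    simpl. rewrite Rabs_left1.
    2:{ pose proof (exp_pos (- (a * b))). apply Rmult_le_reg_r with a; auto. field_simplify; lra. }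
    apply Rmult_lt_reg_r with (a * b). apply Rmult_lt_0_compat; lra.
    replace (- (- exp (- (a * b)) / a) * (a * b)) with (b * 1 * exp (- (a * b))) by (field; lra).
    eapply Rle_lt_trans. apply H.
    replace (1 / (a * 1)) with (/ a) by (field; lra).
    apply Rmult_lt_reg_r with (/ a * / eps). apply Rmult_lt_0_compat; apply Rinv_0_lt_compat; lra.
    replace (/ a * (/ a * / eps)) with (1 / (a * a * eps)) by (field; lra).
    replace (eps * (a * b) * (/ a * / eps)) with b by (field; lra). auto.
  - destruct (IHp (eps / 2 * a / INR (S p))) as [M1 HM1].
    { apply Rdiv_lt_0_compat. apply Rmult_lt_0_compat; lra. apply lt_0_INR; lia. }
    (* x^(p+1) e^{-ax} <= (p+2)!/(a^(p+2) x) *)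
    set (K := INR (fact (S (S p))) / a ^ (S (S p))).
    assert (HK : 0 < K). { unfold K. apply Rdiv_lt_0_compat. apply fact_pos. apply pow_lt; lra. }
    exists (Rmax M1 (2 * K / (a * eps))). intros b Hb.
    assert (HbM : M1 < b) by (pose proof (Rmax_l M1 (2 * K / (a * eps))); lra).
    assert (HbK : 2 * K / (a * eps) < b) by (pose proof (Rmax_r M1 (2 * K / (a * eps))); lra).
    assert (Hb0 : 0 < b). { eapply Rlt_trans. 2: apply HbK. apply Rdiv_lt_0_compat. lra. apply Rmult_lt_0_compat; lra. }
    specialize (HM1 b HbM).
    simpl Aexp.
    eapply Rle_lt_trans. apply Rabs_triang.
    assert (H1 : Rabs (- exp (- (a * b)) * b ^ S p / a) < eps / 2).
    { pose proof (pow_exp_bound a b (S (S p)) Ha (Rlt_le _ _ Hb0)). fold K in H.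
      rewrite Rabs_left1.
      2:{ pose proof (exp_pos (- (a * b))). pose proof (pow_lt b (S p) Hb0).
          apply Rmult_le_reg_r with a; auto. field_simplify; try lra.
          assert (0 <= exp (- (a * b)) * b ^ S p) by (apply Rmult_le_pos; lra). lra. }
      apply Rmult_lt_reg_r with (a * b). apply Rmult_lt_0_compat; lra.
      replace (- (- exp (- (a * b)) * b ^ S p / a) * (a * b)) with (b ^ S (S p) * exp (- (a * b))) by (simpl; field; lra).
      eapply Rle_lt_trans. apply H.
      apply Rmult_lt_reg_r with (2 / (a * eps)). apply Rdiv_lt_0_compat; try lra. apply Rmult_lt_0_compat; lra.
      replace (eps / 2 * (a * b) * (2 / (a * eps))) with b by (field; lra).
      replace (K * (2 / (a * eps))) with (2 * K / (a * eps)) by (field; lra). auto. }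
    assert (H2 : Rabs (INR (S p) / a * Aexp a p b) < eps / 2).
    { rewrite Rabs_mult. rewrite Rabs_pos_eq.
      2:{ apply Rdiv_le_0_compat. apply pos_INR. lra. }
      assert (0 < INR (S p)) by (apply lt_0_INR; lia).
      apply Rmult_lt_reg_l with (a / INR (S p)). apply Rdiv_lt_0_compat; lra.
      replace (a / INR (S p) * (INR (S p) / a * Rabs (Aexp a p b))) with (Rabs (Aexp a p b)) by (field; lra).
      replace (a / INR (S p) * (eps / 2)) with (eps / 2 * a / INR (S p)) by (field; lra). auto. }
    change (b * b ^ p) with (b ^ S p). change (match p with 0%nat => 1 | S _ => INR p + 1 end) with (INR (S p)). lra.
Qed.

Lemma int_exp_pow a p : 0 < a ->
  is_RInt_gen (fun x => exp (- (a * x)) * x ^ p) (at_point 0) (Rbar_locally p_infty)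
    (INR (fact p) / a ^ (S p)).
Proof.
  intros Ha.
  assert (Hi : forall b, is_RInt (fun x => exp (- (a * x)) * x ^ p) 0 b (Aexp a p b - Aexp a p 0)).
  { intro b. apply (is_RInt_derive (Aexp a p)).
    - intros x _. apply Aexp_derive; auto.
    - intros x _. apply (continuous_mult (fun x => exp (- (a * x))) (fun x => x ^ p)).
      + apply (continuous_comp (fun x => - (a * x)) exp). 2: apply continuous_exp.
        apply (continuous_opp (fun x => a * x)). apply (continuous_mult (fun _ => a) (fun x => x)). apply continuous_const. apply continuous_id.
      + apply (ex_derive_continuous (fun x => x ^ p)). auto_derive. auto. }
  intros P [eps HP].
  destruct (Aexp_lim a p Ha eps (cond_pos eps)) as [M HM].
  exists (fun x => x = 0) (fun b => M < b).
  - reflexivity.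
  - exists M; auto.
  - intros x y -> Hy. simpl. exists (Aexp a p y - Aexp a p 0). split. apply Hi.
    apply HP. rewrite Aexp_0; auto. specialize (HM y Hy).
    change (Rabs ((Aexp a p y - - INR (fact p) / a ^ S p) - INR (fact p) / a ^ S p) < eps).
    assert (Heq : (Aexp a p y - - INR (fact p) / a ^ S p) - INR (fact p) / a ^ S p = Aexp a p y).
    { unfold Rdiv. ring. }
    rewrite Heq. auto.
Qed.

Lemma gen_of_lim (f : R -> R) (l : R) :
  (forall b, 0 < b -> ex_RInt f 0 b) ->
  (forall eps, 0 < eps -> exists M, forall b, M < b -> Rabs (RInt f 0 b - l) < eps) ->
  is_RInt_gen f (at_point 0) (Rbar_locally p_infty) l.
Proof.
  intros Hex Hlim P [eps HP].
  destruct (Hlim eps (cond_pos eps)) as [M HM].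
  exists (fun a => a = 0) (fun b => Rmax M 0 < b).
  - reflexivity.
  - exists (Rmax M 0); auto.
  - intros x y -> Hy. simpl.
    assert (0 < y) by (pose proof (Rmax_r M 0); lra).
    assert (M < y) by (pose proof (Rmax_l M 0); lra).
    exists (RInt f 0 y). split.
    + apply (RInt_correct f 0 y), Hex; auto.
    + apply HP. apply HM; auto.
Qed.

Lemma lim_of_gen (f : R -> R) (l : R) :
  is_RInt_gen f (at_point 0) (Rbar_locally p_infty) l ->
  forall eps, 0 < eps -> exists M, forall b, M < b ->
     ex_RInt f 0 b /\ Rabs (RInt f 0 b - l) < eps.
Proof.
  intros H eps Heps.
  destruct (H (fun y => Rabs (y - l) < eps)) as [Q R HQ [M HR] HP].
  - exists (mkposreal eps Heps). intros y Hy. apply Hy.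
  - exists M. intros b Hb.
    destruct (HP 0 b HQ (HR b Hb)) as [y [Hy1 Hy2]]. simpl in *.
    split. exists y; auto.
    rewrite (is_RInt_unique _ _ _ _ Hy1). auto.
Qed.

Lemma is_RInt_expd (d b : R) : 0 < d ->
  is_RInt (fun x => exp (- (d * x))) 0 b ((1 - exp (- (d * b))) / d).
Proof.
  intros Hd.
  replace ((1 - exp (- (d * b))) / d) with
    (minus ((fun x => - exp (- (d * x)) / d) b) ((fun x => - exp (- (d * x)) / d) 0)).
  2:{ unfold minus, plus, opp; simpl. rewrite Rmult_0_r, Ropp_0, exp_0. field. lra. }
  apply (is_RInt_derive (fun x => - exp (- (d * x)) / d)).
  - intros x _. auto_derive; auto. field. lra.
  - intros x _. apply (continuous_comp (fun x => - (d * x)) exp). 2: apply continuous_exp.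
    apply (continuous_opp (fun x => d * x)). apply (continuous_mult (fun _ => d) (fun x => x)). apply continuous_const. apply continuous_id.
Qed.

Lemma RInt_bound_exp (g : R -> R) (K d b : R) : 0 < d -> 0 <= b -> 0 <= K ->
  (forall x, 0 < x -> Rabs (g x) <= K * exp (- (d * x))) ->
  ex_RInt g 0 b -> Rabs (RInt g 0 b) <= K / d.
Proof.
  intros Hd Hb HK Hg Hi.
  eapply Rle_trans. apply abs_RInt_le; auto.
  eapply Rle_trans. apply (RInt_le _ (fun x => K * exp (- (d * x)))); auto.
  - apply (ex_RInt_norm g); auto.
  - apply (ex_RInt_scal (fun x => exp (- (d * x))) 0 b K). eexists. apply is_RInt_expd; auto.
  - intros x Hx. apply Hg. lra.
  - replace (RInt (fun x => K * exp (- (d * x))) 0 b) with (K * ((1 - exp (- (d * b))) / d)).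
    2:{ symmetry. apply is_RInt_unique. apply (is_RInt_scal (fun x => exp (- (d * x))) 0 b K). apply is_RInt_expd; auto. }
    pose proof (exp_pos (- (d * b))).
    apply Rmult_le_reg_r with d; auto. field_simplify; try lra.
    assert (0 <= K * exp (- (d*b))) by (apply Rmult_le_pos; lra). lra.
Qed.

Lemma is_series_lim (a : nat -> R) l : is_series a l -> is_lim_seq (sum_f_R0 a) l.
Proof.
  intro H. apply (is_lim_seq_ext (sum_n a)). intro; apply sum_n_Reals. exact H.
Qed.

Lemma tail_bound (a b : nat -> R) la lb N :
  is_series a la -> is_series b lb -> (forall n, Rabs (a n) <= b n) ->
  Rabs (la - sum_f_R0 a N) <= lb - sum_f_R0 b N.
Proof.
  intros Ha Hb Hab.
  apply is_series_lim in Ha. apply is_series_lim in Hb.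
  assert (Hu : is_lim_seq (fun k => Rabs (sum_f_R0 a (k + N) - sum_f_R0 a N)) (Rabs (la - sum_f_R0 a N))).
  { apply (is_lim_seq_abs _ (Finite (la - sum_f_R0 a N))).
    apply is_lim_seq_minus'. apply (is_lim_seq_incr_n (sum_f_R0 a) N la); auto.
    apply is_lim_seq_const. }
  assert (Hv : is_lim_seq (fun k => sum_f_R0 b (k + N) - sum_f_R0 b N) (lb - sum_f_R0 b N)).
  { apply is_lim_seq_minus'. apply (is_lim_seq_incr_n (sum_f_R0 b) N lb); auto.
    apply is_lim_seq_const. }
  assert (Hle : forall k, Rabs (sum_f_R0 a (k + N) - sum_f_R0 a N) <= sum_f_R0 b (k + N) - sum_f_R0 b N).
  { induction k.
    - simpl. replace (sum_f_R0 a N - sum_f_R0 a N) with 0 by ring.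
      rewrite Rabs_R0. lra.
    - replace (S k + N)%nat with (S (k + N)) by lia. simpl.
      eapply Rle_trans.
      replace (sum_f_R0 a (k + N) + a (S (k + N)) - sum_f_R0 a N) with
        ((sum_f_R0 a (k + N) - sum_f_R0 a N) + a (S (k + N))) by ring.
      apply Rabs_triang. specialize (Hab (S (k + N))). lra. }
  exact (is_lim_seq_le _ _ _ _ Hle Hu Hv).
Qed.

Lemma finite_lim (g : nat -> R -> R) (I : nat -> R) :
  (forall n eps, 0 < eps -> exists M, forall b, M < b -> Rabs (g n b - I n) < eps) ->
  forall N eps, 0 < eps -> exists M, forall b, M < b ->
    Rabs (sum_f_R0 (fun n => g n b) N - sum_f_R0 I N) < eps.
Proof.
  intros H N. induction N; intros eps Heps.
  - destruct (H 0%nat eps Heps) as [M HM]. exists M. intros b Hb. simpl. auto.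
  - destruct (IHN (eps/2)) as [M1 HM1]. lra.
    destruct (H (S N) (eps/2)) as [M2 HM2]. lra.
    exists (Rmax M1 M2). intros b Hb. simpl.
    assert (M1 < b) by (pose proof (Rmax_l M1 M2); lra).
    assert (M2 < b) by (pose proof (Rmax_r M1 M2); lra).
    specialize (HM1 b H0). specialize (HM2 b H1).
    replace (sum_f_R0 (fun n => g n b) N + g (S N) b - (sum_f_R0 I N + I (S N))) with
      ((sum_f_R0 (fun n => g n b) N - sum_f_R0 I N) + (g (S N) b - I (S N))) by ring.
    eapply Rle_lt_trans. apply Rabs_triang. lra.
Qed.

Lemma RInt_sum (f : nat -> R -> R) b N :
  (forall n, ex_RInt (f n) 0 b) ->
  ex_RInt (fun x => sum_f_R0 (fun n => f n x) N) 0 b /\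
  RInt (fun x => sum_f_R0 (fun n => f n x) N) 0 b = sum_f_R0 (fun n => RInt (f n) 0 b) N.
Proof.
  intros H. induction N.
  - simpl. split; auto.
  - destruct IHN as [H1 H2]. simpl. split.
    + apply (ex_RInt_plus (fun x => sum_f_R0 (fun n => f n x) N) (f (S N))); auto.
    + rewrite <- H2. apply (RInt_plus (fun x => sum_f_R0 (fun n => f n x) N) (f (S N))); auto.
Qed.

Lemma IL (f : nat -> R -> R) (F : R -> R) (C I : nat -> R) (d : R) :
  0 < d ->
  (forall n x, 0 < x -> Rabs (f n x) <= C n * exp (- (d * x))) ->
  ex_series C ->
  (forall n, is_RInt_gen (f n) (at_point 0) (Rbar_locally p_infty) (I n)) ->
  (forall x, 0 < x -> is_series (fun n => f n x) (F x)) ->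
  (forall b, 0 < b -> ex_RInt F 0 b) ->
  ex_series I /\ is_RInt_gen F (at_point 0) (Rbar_locally p_infty) (Series I).
Proof.
  intros Hd Hf HC HI HF HFi.
  assert (HC0 : forall n, 0 <= C n).
  { intro n. specialize (Hf n 1 Rlt_0_1). pose proof (Rabs_pos (f n 1)).
    pose proof (exp_pos (- (d * 1))).
    destruct (Rle_dec 0 (C n)); auto. exfalso. assert (C n * exp (- (d * 1)) < 0).
    apply Rmult_neg_pos; lra. lra. }
  assert (Hexn : forall n b, 0 < b -> ex_RInt (f n) 0 b).
  { intros n b Hb. destruct (lim_of_gen _ _ (HI n) 1 Rlt_0_1) as [M HM].
    destruct (HM (Rmax (M+1) (b+1))) as [Hx _]. pose proof (Rmax_l (M+1) (b+1)); lra.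
    apply (ex_RInt_Chasles_1 (f n) 0 b (Rmax (M+1) (b+1))); auto.
    pose proof (Rmax_r (M+1) (b+1)); lra. }
  assert (HIb : forall n, Rabs (I n) <= C n / d).
  { intro n. apply Rle_plus_epsilon. intros eps Heps.
    destruct (lim_of_gen _ _ (HI n) eps Heps) as [M HM].
    set (b := Rmax M 0 + 1).
    assert (Hb0 : 0 < b) by (unfold b; pose proof (Rmax_r M 0); lra).
    destruct (HM b) as [Hx Hy]. unfold b; pose proof (Rmax_l M 0); lra.
    pose proof (RInt_bound_exp (f n) (C n) d b Hd (Rlt_le _ _ Hb0) (HC0 n) (Hf n) Hx).
    replace (I n) with (RInt (f n) 0 b + (I n - RInt (f n) 0 b)) by ring.
    eapply Rle_trans. apply Rabs_triang. rewrite Rabs_minus_sym in Hy. lra. }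
  destruct HC as [SC HSC].
  assert (HSCd : is_series (fun n => C n / d) (SC / d)) by (apply is_series_scal_r; auto).
  assert (exI : ex_series I).
  { apply (ex_series_le I (fun n => C n / d)). intro n. apply HIb. eexists; eauto. }
  split; auto.
  destruct exI as [SI HSI]. rewrite (is_series_unique _ _ HSI).
  apply gen_of_lim; auto.
  intros eps Heps.
  assert (HT : exists N, SC - sum_f_R0 C N < eps * d / 3).
  { pose proof (is_series_lim _ _ HSC) as Hl. apply is_lim_seq_spec in Hl.
    destruct (Hl (mkposreal (eps * d / 3) ltac:(apply Rdiv_lt_0_compat; [apply Rmult_lt_0_compat; lra| lra]))) as [N HN].
    exists N. specialize (HN N (le_n N)). simpl in HN.
    apply Rabs_def2 in HN. lra. }
  destruct HT as [N HN].
  destruct (finite_lim (fun n b => RInt (f n) 0 b) I) with (N := N) (eps := eps / 3) as [M HM].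
  { intros n e He. destruct (lim_of_gen _ _ (HI n) e He) as [M HM]. exists M.
    intros b Hb. apply HM; auto. }
  lra.
  exists (Rmax M 0). intros b Hb.
  assert (Hb0 : 0 < b) by (pose proof (Rmax_r M 0); lra).
  assert (HbM : M < b) by (pose proof (Rmax_l M 0); lra).
  destruct (RInt_sum f b N (fun n => Hexn n b Hb0)) as [HS1 HS2].
  assert (Ha : Rabs (RInt F 0 b - RInt (fun x => sum_f_R0 (fun n => f n x) N) 0 b) <= (SC - sum_f_R0 C N) / d).
  { replace (RInt F 0 b - RInt (fun x => sum_f_R0 (fun n => f n x) N) 0 b) with
      (RInt (fun x => F x - sum_f_R0 (fun n => f n x) N) 0 b).
    2:{ apply (RInt_minus F (fun x => sum_f_R0 (fun n => f n x) N)); auto. }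
    apply RInt_bound_exp; auto. lra.
    - pose proof (Rle_trans _ _ _ (Rabs_pos _) (tail_bound C C SC SC N HSC HSC (fun n => Req_le _ _ (Rabs_pos_eq _ (HC0 n))))). lra.
    - intros x Hx.
      pose proof (tail_bound (fun n => f n x) (fun n => C n * exp (- (d * x))) (F x) (SC * exp (- (d * x))) N
        (HF x Hx) (is_series_scal_r _ _ _ HSC) (fun n => Hf n x Hx)).
      assert (sum_f_R0 (fun n => C n * exp (- (d * x))) N = sum_f_R0 C N * exp (- (d * x))).
      { clear. induction N; simpl; auto. rewrite IHN. ring. }
      rewrite H0 in H. lra.
    - apply (ex_RInt_minus F (fun x => sum_f_R0 (fun n => f n x) N)); auto. }
  assert (Hsd : sum_f_R0 (fun n => C n / d) N = sum_f_R0 C N / d).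
  { clear -Hd. induction N; simpl; auto. rewrite IHN. field. lra. }
  pose proof (tail_bound I (fun n => C n / d) SI (SC / d) N HSI HSCd HIb) as Hc.
  rewrite Hsd in Hc. specialize (HM b HbM). rewrite <- HS2 in HM.
  replace (RInt F 0 b - SI) with
    ((RInt F 0 b - RInt (fun x => sum_f_R0 (fun n => f n x) N) 0 b)
     + (RInt (fun x => sum_f_R0 (fun n => f n x) N) 0 b - sum_f_R0 I N)
     - (SI - sum_f_R0 I N)) by ring.
  set (A1 := RInt F 0 b - RInt (fun x => sum_f_R0 (fun n => f n x) N) 0 b) in *.
  set (A2 := RInt (fun x => sum_f_R0 (fun n => f n x) N) 0 b - sum_f_R0 I N) in *.
  set (A3 := SI - sum_f_R0 I N) in *.
  pose proof (Rabs_triang (A1 + A2) (- A3)). rewrite Rabs_Ropp in H.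
  pose proof (Rabs_triang A1 A2).
  unfold Rminus at 1.
  assert ((SC - sum_f_R0 C N) / d < eps / 3).
  { apply Rmult_lt_reg_r with d; auto. field_simplify; lra. }
  assert (SC / d - sum_f_R0 C N / d = (SC - sum_f_R0 C N) / d) by (field; lra).
  lra.
Qed.



Definition bc (z : R) (k j : nat) : R := z ^ j / (INR (fact j) * INR (fact (j + k))).

Lemma bc_radius z k : z <> 0 -> CV_radius (bc z k) = p_infty.
Proof.
  intros Hz. apply CV_radius_infinite_DAlembert.
  - intro n. unfold bc. apply Rmult_integral_contrapositive_currified.
    apply pow_nonzero; auto. apply Rinv_neq_0_compat.
    apply Rmult_integral_contrapositive_currified; apply Rgt_not_eq, fact_pos.
  - apply is_lim_seq_le_le with (u := fun _ => 0) (w := fun n => Rabs z * / INR (S n)).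
    + intro n. split. apply Rabs_pos.
      unfold bc. replace (S n + k)%nat with (S (n + k)) by lia.
      rewrite !fact_simpl, !mult_INR.
      pose proof (fact_pos n). pose proof (fact_pos (n + k)).
      assert (0 < INR (S n)) by (apply lt_0_INR; lia).
      assert (1 <= INR (S (n + k))) by (apply (le_INR 1); lia).
      assert (z ^ n <> 0) by (apply pow_nonzero; auto).
      replace (z ^ S n / (INR (S n) * INR (fact n) * (INR (S (n + k)) * INR (fact (n + k)))) /
         (z ^ n / (INR (fact n) * INR (fact (n + k)))))
        with (z / (INR (S n) * INR (S (n + k)))) by (rewrite <- tech_pow_Rmult; field; repeat split; auto; lra).
      rewrite Rabs_div. 2: { apply Rgt_not_eq. apply Rmult_lt_0_compat; lra. }
      rewrite (Rabs_pos_eq (INR (S n) * INR (S (n + k)))). 2: { apply Rmult_le_pos; lra. }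
      unfold Rdiv. apply Rmult_le_compat_l. apply Rabs_pos.
      apply Rinv_le_contravar. auto. rewrite <- (Rmult_1_r (INR (S n))) at 1.
      apply Rmult_le_compat_l; lra.
    + apply is_lim_seq_const.
    + replace (Finite 0) with (Rbar_mult (Rabs z) 0) by (simpl; f_equal; ring).
      apply is_lim_seq_scal_l.
      replace (Finite 0) with (Rbar_inv p_infty) by reflexivity.
      apply (is_lim_seq_inv (fun n => INR (S n)) p_infty).
      apply (is_lim_seq_incr_1 INR p_infty). apply is_lim_seq_INR. discriminate.
Qed.

Lemma BesselJ_eq k y : BesselJ k y = (y/2)^k * PSeries (bc (-1) k) ((y/2)^2).
Proof.
  unfold BesselJ, PSeries. rewrite <- Series_scal_l. apply Series_ext. intro j.
  unfold bc. rewrite pow_add, pow_mult. unfold Rdiv. ring.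
Qed.

Lemma BesselI_eq k y : BesselI k y = (y/2)^k * PSeries (bc 1 k) ((y/2)^2).
Proof.
  unfold BesselI, PSeries. rewrite <- Series_scal_l. apply Series_ext. intro j.
  unfold bc. rewrite pow_add, pow_mult, pow1. unfold Rdiv. ring.
Qed.
Definition cP (y : R) (q p : nat) : R :=
  if (p <? q)%nat then 0 else y ^ (p - q) / (INR (fact (p - q)) * INR (fact p)).

Definition Pq (y : R) (q : nat) (x : R) : R := PSeries (cP y q) x.

Lemma PS_incr_n_eq (a : nat -> R) n p :
  PS_incr_n a n p = if (p <? n)%nat then 0 else a (p - n)%nat.
Proof.
  revert p; induction n; intro p.
  - simpl. rewrite Nat.sub_0_r. reflexivity.
  - simpl. destruct p. reflexivity. simpl PS_incr_1. rewrite IHn. reflexivity.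
Qed.

Lemma cP_incr y q p : cP y q p = PS_incr_n (bc y q) q p.
Proof.
  rewrite PS_incr_n_eq. unfold cP, bc.
  destruct (p <? q)%nat eqn:E; auto.
  apply Nat.ltb_ge in E. replace (p - q + q)%nat with p by lia. reflexivity.
Qed.

Lemma CV_radius_incr_n (a : nat -> R) n : CV_radius (PS_incr_n a n) = CV_radius a.
Proof.
  induction n; simpl; auto. rewrite CV_radius_incr_1. auto.
Qed.

Lemma cP_radius y q : y <> 0 -> CV_radius (cP y q) = p_infty.
Proof.
  intros Hy. rewrite (CV_radius_ext _ _ (cP_incr y q)).
  rewrite CV_radius_incr_n. apply bc_radius; auto.
Qed.

Lemma P_eq y q x : Pq y q x = x ^ q * PSeries (bc y q) x.
Proof.
  unfold Pq. rewrite <- PSeries_incr_n. apply PSeries_ext. apply cP_incr.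
Qed.

Lemma P_deriv y q x : y <> 0 -> is_derive (Pq y (S q)) x (Pq y q x).
Proof.
  intros Hy. unfold Pq.
  replace (PSeries (cP y q) x) with (PSeries (PS_derive (cP y (S q))) x).
  apply (is_derive_PSeries (cP y (S q)) x). rewrite cP_radius; simpl; auto.
  apply PSeries_ext. intro n. unfold PS_derive, cP.
  replace (S n <? S q)%nat with (n <? q)%nat by reflexivity.
  destruct (n <? q)%nat eqn:E. ring.
  apply Nat.ltb_ge in E. replace (S n - S q)%nat with (n - q)%nat by lia.
  rewrite fact_simpl, mult_INR.
  pose proof (fact_pos n). pose proof (fact_pos (n - q)).
  assert (0 < INR (S n)) by (apply lt_0_INR; lia).
  field. repeat split; lra.
Qed.

Lemma P_continuous y q x : y <> 0 -> continuous (Pq y q) x.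
Proof.
  intros Hy. apply continuity_pt_filterlim. apply PSeries_continuity.
  rewrite cP_radius; simpl; auto.
Qed.

Definition V (y : R) (l d : nat) (x : R) : R :=
  sum_f_R0 (fun n => (-1) ^ n * INR (binom l n) * Pq y (d + n) x) l.

Lemma is_derive_sum (g g' : nat -> R -> R) x N :
  (forall n, is_derive (g n) x (g' n x)) ->
  is_derive (fun x => sum_f_R0 (fun n => g n x) N) x (sum_f_R0 (fun n => g' n x) N).
Proof.
  intros H. induction N; simpl; auto.
  apply (is_derive_plus (fun x => sum_f_R0 (fun n => g n x) N) (g (S N))); auto.
Qed.

Lemma V_pascal y l d x : V y (S l) d x = V y l d x - V y l (S d) x.
Proof.
  unfold V. rewrite sum_shift. simpl binom.
  set (g := fun n => (-1) ^ n * INR (binom l n) * Pq y (d + n) x).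
  set (h := fun n => (-1) ^ n * INR (binom l n) * Pq y (S d + n) x).
  rewrite (sum_ext_R _ (fun n => - h n + g (S n))).
  2:{ intros n _. unfold g, h. rewrite plus_INR. replace (d + S n)%nat with (S d + n)%nat by lia.
      simpl. ring. }
  rewrite sum_plus_R, sum_opp_R.
  assert (Hg : sum_f_R0 g (S l) = g O + sum_f_R0 (fun n => g (S n)) l) by apply sum_shift.
  assert (Hg2 : sum_f_R0 g (S l) = sum_f_R0 g l) .
  { simpl. unfold g at 2. rewrite binom_gt by lia. simpl. ring. }
  assert (Hg0 : g O = Pq y d x).
  { unfold g. rewrite Nat.add_0_r. replace (binom l 0) with 1%nat by (destruct l; reflexivity). rewrite pow_O. change (INR 1) with 1. ring. }
  rewrite Nat.add_0_r. replace ((-1) ^ 0 * INR 1) with 1 by (simpl; ring).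
  lra.
Qed.

Lemma Derive_V y l : y <> 0 -> forall d x,
  Derive_n (fun x => exp (- x) * Pq y (d + l) x) l x = exp (- x) * V y l d x.
Proof.
  intros Hy. induction l; intros d x.
  - simpl. unfold V. simpl. rewrite Nat.add_0_r. ring.
  - simpl Derive_n.
    replace (fun x => exp (- x) * Pq y (d + S l) x) with (fun x => exp (- x) * Pq y (S d + l) x).
    2:{ apply functional_extensionality. intro t. f_equal. f_equal. lia. }
    rewrite (Derive_ext _ (fun x => exp (- x) * V y l (S d) x)) by (intro; apply IHl).
    apply is_derive_unique.
    rewrite V_pascal.
    replace (exp (- x) * (V y l d x - V y l (S d) x)) with
      (- exp (- x) * V y l (S d) x + exp (- x) * V y l d x) by ring.
    apply (is_derive_mult (fun x => exp (- x)) (V y l (S d))).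
    + auto_derive; auto. ring.
    + unfold V. apply (is_derive_sum (fun n x => (-1) ^ n * INR (binom l n) * Pq y (S d + n) x) (fun n x => (-1) ^ n * INR (binom l n) * Pq y (d + n) x)).
      intro n. apply (is_derive_scal (Pq y (S d + n))). simpl. apply P_deriv; auto.
    + intros; apply Rmult_comm.
Qed.

Lemma exp_radius : CV_radius (fun n => / INR (fact n)) = p_infty.
Proof.
  apply CV_radius_infinite_DAlembert.
  - intro n. apply Rinv_neq_0_compat. apply Rgt_not_eq, fact_pos.
  - apply is_lim_seq_le_le with (u := fun _ => 0) (w := fun n => / INR (S n)).
    + intro n. split. apply Rabs_pos. rewrite fact_simpl, mult_INR.
      pose proof (fact_pos n). assert (0 < INR (S n)) by (apply lt_0_INR; lia).
      replace (/ (INR (S n) * INR (fact n)) / / INR (fact n)) with (/ INR (S n)) by (field; lra).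
      rewrite Rabs_pos_eq. lra. left; apply Rinv_0_lt_compat; auto.
    + apply is_lim_seq_const.
    + replace (Finite 0) with (Rbar_inv p_infty) by reflexivity.
      apply (is_lim_seq_inv (fun n => INR (S n)) p_infty).
      apply (is_lim_seq_incr_1 INR p_infty). apply is_lim_seq_INR. discriminate.
Qed.

Lemma is_series_exp z : is_series (fun n => z ^ n / INR (fact n)) (exp z).
Proof.
  rewrite exp_Reals.
  apply (is_series_ext (fun n => / INR (fact n) * z ^ n)).
  2:{ apply is_pseries_R. apply PSeries_correct. apply CV_radius_inside. rewrite exp_radius. simpl; auto. }
  intro n. apply Rmult_comm.
Qed.

Lemma ex_series_exp z : ex_series (fun n => z ^ n / INR (fact n)).
Proof. eexists. apply is_series_exp. Qed.

Lemma sum_ge_term (f : nat -> R) N k : (k <= N)%nat -> (forall i, (i <= N)%nat -> 0 <= f i) -> f k <= sum_f_R0 f N.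
Proof.
  intros Hk Hf. induction N.
  - replace k with 0%nat by lia. simpl; lra.
  - destruct (Nat.eq_dec k (S N)) as [->|Hne].
    + simpl. assert (forall M, (M <= N)%nat -> 0 <= sum_f_R0 f M).
      { induction M; intros HM; simpl. apply Hf; lia. pose proof (Hf (S M) ltac:(lia)). pose proof (IHM ltac:(lia)). lra. }
      pose proof (H N (le_n N)). lra.
    + simpl. pose proof (Hf (S N) (le_n _)). assert (f k <= sum_f_R0 f N) by (apply IHN; [lia| intros; apply Hf; lia]). lra.
Qed.

Lemma binom_le_pow n k : INR (binom n k) <= 2 ^ n.
Proof.
  destruct (Compare_dec.le_lt_dec k n) as [H|H].
  - rewrite binom_C by auto.
    replace 2 with (1 + 1) by ring. rewrite binomial.
    eapply Rle_trans. 2: apply (sum_ge_term (fun i => Binomial.C n i * 1 ^ i * 1 ^ (n - i)) n k H).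
    rewrite !pow1. lra.
    intros i Hi. rewrite !pow1. rewrite <- binom_C by auto. rewrite !Rmult_1_r. apply pos_INR.
  - rewrite binom_gt by auto. simpl. left; apply pow_lt; lra.
Qed.

Lemma fact_split p q : INR (fact (p + q)) <= 2 ^ (p + q) * INR (fact p) * INR (fact q).
Proof.
  pose proof (binom_le_pow (p + q) p). rewrite binom_fact in H by lia.
  replace (p + q - p)%nat with q in H by lia.
  pose proof (fact_pos p). pose proof (fact_pos q).
  apply Rmult_le_reg_r with (/ (INR (fact p) * INR (fact q))).
  apply Rinv_0_lt_compat, Rmult_lt_0_compat; auto.
  replace (2 ^ (p + q) * INR (fact p) * INR (fact q) * / (INR (fact p) * INR (fact q))) with (2 ^ (p + q)) by (field; lra).
  exact H.
Qed.

Lemma fact_mono n k : (n <= k)%nat -> INR (fact n) <= INR (fact k).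
Proof. intros H. apply le_INR. apply fact_le. auto. Qed.

Lemma bc_abs m j : Rabs (bc (-1) m j) = / (INR (fact j) * INR (fact (j + m))).
Proof.
  unfold bc, Rdiv. rewrite Rabs_mult, pow_1_abs, Rmult_1_l. apply Rabs_pos_eq.
  left. apply Rinv_0_lt_compat, Rmult_lt_0_compat; apply fact_pos.
Qed.

Lemma G_bound m c z : 0 < c -> 0 <= z ->
  Rabs (PSeries (bc (-1) m) z) <= exp (c * z) * exp (/ c).
Proof.
  intros Hc Hz. unfold PSeries.
  assert (Hab : ex_series (fun n => Rabs (bc (-1) m n * z ^ n))).
  { apply CV_disk_inside. rewrite bc_radius. simpl; auto. lra. }
  eapply Rle_trans. apply Series_Rabs; auto.
  assert (Hb : is_series (fun n => exp (c * z) * ((/ c) ^ n / INR (fact n))) (exp (c * z) * exp (/ c))).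
  { exact (is_series_scal_l (exp (c * z)) _ _ (is_series_exp (/ c))). }
  rewrite <- (is_series_unique _ _ Hb).
  apply Series_le. 2: eexists; eauto.
  intro n. split. apply Rabs_pos.
  rewrite Rabs_mult, bc_abs, Rabs_pos_eq by (apply pow_le; auto).
  pose proof (fact_pos n). pose proof (fact_mono n (n + m) ltac:(lia)).
  pose proof (exp_ge_pow (c * z) n ltac:(apply Rmult_le_pos; lra)).
  rewrite Rpow_mult_distr in H1.
  assert (Hcn : 0 < c ^ n) by (apply pow_lt; auto).
  assert (Hzn : 0 <= z ^ n) by (apply pow_le; auto).
  (* z^n / (n! (n+m)!) <= z^n/(n! n!) = (c^n z^n / n!) * (/c)^n / n! *)
  apply Rle_trans with (z ^ n / (INR (fact n) * INR (fact n))).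
  { unfold Rdiv. rewrite Rmult_comm. apply Rmult_le_compat_l; auto.
    apply Rinv_le_contravar. apply Rmult_lt_0_compat; lra.
    apply Rmult_le_compat_l; lra. }
  replace (z ^ n / (INR (fact n) * INR (fact n))) with ((c ^ n * z ^ n / INR (fact n)) * ((/ c) ^ n / INR (fact n))).
  2:{ rewrite <- Rinv_pow by lra. field. split; lra. }
  apply Rmult_le_compat_r.
  apply Rmult_le_pos. apply pow_le. left; apply Rinv_0_lt_compat; auto. left; apply Rinv_0_lt_compat; auto.
  exact H1.
Qed.

Lemma PS_cont (c : nat -> R) : CV_radius c = p_infty -> forall z, continuous (PSeries c) z.
Proof. intros H z. apply continuity_pt_filterlim. apply PSeries_continuity. rewrite H. simpl; auto. Qed.

Lemma cont_lin (v : R) z : continuous (fun x => v * x) z.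
Proof. apply (continuous_mult (fun _ => v) (fun x => x)). apply continuous_const. apply continuous_id. Qed.

Lemma cont_expa (a : R) z : continuous (fun x => exp (- (a * x))) z.
Proof.
  apply (continuous_comp (fun x => - (a * x)) exp). 2: apply continuous_exp.
  apply (continuous_opp (fun x => a * x)). apply cont_lin.
Qed.

Lemma cont_pow n z : continuous (fun x => x ^ n) z.
Proof. apply (ex_derive_continuous (fun x => x ^ n)). auto_derive. auto. Qed.

Lemma cont_PSlin (c : nat -> R) v z : CV_radius c = p_infty -> continuous (fun x => PSeries c (v * x)) z.
Proof. intros H. apply (continuous_comp (fun x => v * x) (PSeries c)). apply cont_lin. apply PS_cont; auto. Qed.

Lemma PS_series (c : nat -> R) z : CV_radius c = p_infty -> is_series (fun n => c n * z ^ n) (PSeries c z).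
Proof. intros H. apply is_pseries_R. apply PSeries_correct. apply CV_radius_inside. rewrite H. simpl; auto. Qed.

Lemma L2 (a v : R) (m k : nat) : 0 < a -> 0 <= v ->
  is_RInt_gen (fun x => exp (- (a * x)) * x ^ (k + m) * PSeries (bc (-1) m) (v * x))
    (at_point 0) (Rbar_locally p_infty)
    (Series (fun j => bc (-1) m j * v ^ j * (INR (fact (k + m + j)) / a ^ S (k + m + j)))).
Proof.
  intros Ha Hv.
  assert (Hrad : CV_radius (bc (-1) m) = p_infty) by (apply bc_radius; lra).
  set (C := fun j => Rabs (bc (-1) m j) * v ^ j * (INR (fact (k + m + j)) / (a / 2) ^ (k + m + j))).
  assert (HC0 : forall j, 0 <= C j).
  { intro j. unfold C. apply Rmult_le_pos. apply Rmult_le_pos. apply Rabs_pos. apply pow_le; auto.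
    apply Rdiv_le_0_compat. left; apply fact_pos. apply pow_lt; lra. }
  destruct (IL (fun j x => bc (-1) m j * v ^ j * (exp (- (a * x)) * x ^ (k + m + j)))
               (fun x => exp (- (a * x)) * x ^ (k + m) * PSeries (bc (-1) m) (v * x))
               C (fun j => bc (-1) m j * v ^ j * (INR (fact (k + m + j)) / a ^ S (k + m + j))) (a / 2))
    as [_ HIL]; auto.
  - lra.
  - intros j x Hx. unfold C.
    rewrite Rabs_mult, Rabs_mult, (Rabs_pos_eq (v ^ j)) by (apply pow_le; auto).
    rewrite (Rabs_pos_eq (exp (- (a * x)) * x ^ (k + m + j))).
    2:{ apply Rmult_le_pos. left; apply exp_pos. apply pow_le; lra. }
    rewrite (Rmult_assoc (Rabs (bc (-1) m j) * v ^ j)).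
    apply Rmult_le_compat_l. apply Rmult_le_pos. apply Rabs_pos. apply pow_le; auto.
    replace (exp (- (a * x))) with (exp (- (a / 2 * x)) * exp (- (a / 2 * x))).
    2:{ rewrite <- exp_plus. f_equal. field. }
    pose proof (pow_exp_bound (a / 2) x (k + m + j) ltac:(lra) ltac:(lra)).
    pose proof (exp_pos (- (a / 2 * x))).
    replace (exp (- (a / 2 * x)) * exp (- (a / 2 * x)) * x ^ (k + m + j)) with
      ((x ^ (k + m + j) * exp (- (a / 2 * x))) * exp (- (a / 2 * x))) by ring.
    apply Rmult_le_compat_r; lra.
  - apply (ex_series_le C (fun j => INR (fact k) * (4 / a) ^ (k + m) * ((4 * v / a) ^ j / INR (fact j)))).
    + intro j. change (norm (C j)) with (Rabs (C j)). rewrite Rabs_pos_eq by auto.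
      unfold C. rewrite bc_abs.
      pose proof (fact_split k (m + j)). rewrite Nat.add_assoc in H.
      pose proof (fact_pos j). pose proof (fact_pos k). pose proof (fact_pos (j + m)).
      replace (m + j)%nat with (j + m)%nat in H by lia.
      assert (Ha2 : 0 < (a / 2) ^ (k + m + j)) by (apply pow_lt; lra).
      apply Rle_trans with (/ (INR (fact j) * INR (fact (j + m))) * v ^ j *
                             (2 ^ (k + m + j) * INR (fact k) * INR (fact (j + m)) / (a / 2) ^ (k + m + j))).
      { apply Rmult_le_compat_l. apply Rmult_le_pos. left; apply Rinv_0_lt_compat, Rmult_lt_0_compat; lra. apply pow_le; auto.
        unfold Rdiv. apply Rmult_le_compat_r. left; apply Rinv_0_lt_compat; auto. auto. }
      right. replace 4 with (2 * 2) by ring. unfold Rdiv. rewrite !Rpow_mult_distr. rewrite <- !Rinv_pow by lra.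
      rewrite !pow_add. field. repeat split; try lra; apply pow_nonzero; lra.
    + exact (ex_series_scal_l (INR (fact k) * (4 / a) ^ (k + m)) _ (ex_series_exp (4 * v / a))).
  - intro j. apply (is_RInt_gen_scal (fun x => exp (- (a * x)) * x ^ (k + m + j)) (bc (-1) m j * v ^ j)).
    apply int_exp_pow; auto.
  - intros x Hx.
    pose proof (is_series_scal_l (exp (- (a * x)) * x ^ (k + m)) _ _ (PS_series (bc (-1) m) (v * x) Hrad)) as H.
    eapply is_series_ext. 2: exact H.
    intro j. apply Rminus_diag_uniq. unfold scal; simpl; unfold mult; simpl. rewrite Rpow_mult_distr, !pow_add. ring.
  - intros b Hb. apply (@ex_RInt_continuous R_CompleteNormedModule). intros z _.
    apply (continuous_mult (fun x => exp (- (a * x)) * x ^ (k + m)) (fun x => PSeries (bc (-1) m) (v * x))).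
    apply (continuous_mult (fun x => exp (- (a * x))) (fun x => x ^ (k + m))). apply cont_expa. apply cont_pow.
    apply cont_PSlin; auto.
Qed.

Definition L2val (a v : R) (m k : nat) : R :=
  Series (fun j => bc (-1) m j * v ^ j * (INR (fact (k + m + j)) / a ^ S (k + m + j))).

Lemma L1 (a u v s : R) (m : nat) : 0 < a -> 0 <= u -> 0 < v ->
  is_RInt_gen (fun x => exp (- (a * x)) * PSeries (bc (-1) 0) (u * x) *
                        (s ^ m * x ^ m * PSeries (bc (-1) m) (v * x)))
    (at_point 0) (Rbar_locally p_infty)
    (Series (fun k => s ^ m * bc (-1) 0 k * u ^ k * L2val a v m k)).
Proof.
  intros Ha Hu Hv.
  assert (Hrad : CV_radius (bc (-1) m) = p_infty) by (apply bc_radius; lra).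
  assert (Hrad0 : CV_radius (bc (-1) 0) = p_infty) by (apply bc_radius; lra).
  set (c := a / (4 * v)).
  assert (Hc : 0 < c) by (unfold c; apply Rdiv_lt_0_compat; lra).
  set (C := fun k => Rabs (s ^ m * bc (-1) 0 k * u ^ k) * exp (/ c) * (INR (fact (k + m)) / (a / 4) ^ (k + m))).
  assert (HC0 : forall k, 0 <= C k).
  { intro k. unfold C. apply Rmult_le_pos. apply Rmult_le_pos. apply Rabs_pos. left; apply exp_pos.
    apply Rdiv_le_0_compat. left; apply fact_pos. apply pow_lt; lra. }
  destruct (IL (fun k x => (s ^ m * bc (-1) 0 k * u ^ k) * (exp (- (a * x)) * x ^ (k + m) * PSeries (bc (-1) m) (v * x)))
               (fun x => exp (- (a * x)) * PSeries (bc (-1) 0) (u * x) * (s ^ m * x ^ m * PSeries (bc (-1) m) (v * x)))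
               C (fun k => s ^ m * bc (-1) 0 k * u ^ k * L2val a v m k) (a / 2))
    as [_ HIL]; auto.
  - lra.
  - intros k x Hx. unfold C.
    set (K0 := s ^ m * bc (-1) 0 k * u ^ k).
    rewrite Rabs_mult. rewrite (Rabs_mult (exp (- (a * x)) * x ^ (k + m))).
    rewrite (Rabs_pos_eq (exp (- (a * x)) * x ^ (k + m))).
    2:{ apply Rmult_le_pos. left; apply exp_pos. apply pow_le; lra. }
    pose proof (G_bound m c (v * x) Hc ltac:(apply Rmult_le_pos; lra)).
    replace (c * (v * x)) with (a / 4 * x) in H by (unfold c; field; lra).
    pose proof (pow_exp_bound (a / 4) x (k + m) ltac:(lra) ltac:(lra)).
    set (K := Rabs K0).
    assert (HK : 0 <= K) by apply Rabs_pos.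
    assert (E : exp (- (a * x)) = exp (- (a / 4 * x)) * exp (- (a / 2 * x)) * exp (- (a / 4 * x))).
    { rewrite <- !exp_plus. f_equal. field. }
    assert (Hexp : exp (- (a / 4 * x)) * exp (a / 4 * x) = 1).
    { rewrite <- exp_plus. replace (- (a / 4 * x) + a / 4 * x) with 0 by ring. apply exp_0. }
    pose proof (exp_pos (- (a / 4 * x))). pose proof (exp_pos (- (a / 2 * x))). pose proof (exp_pos (/ c)).
    pose proof (exp_pos (a / 4 * x)).
    assert (Hxn : 0 <= x ^ (k + m)) by (apply pow_le; lra).
    rewrite E.
    apply Rle_trans with (K * (exp (- (a / 4 * x)) * exp (- (a / 2 * x)) * exp (- (a / 4 * x)) * x ^ (k + m) * (exp (a / 4 * x) * exp (/ c)))).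
    { apply Rmult_le_compat_l; auto. apply Rmult_le_compat_l; auto.
      repeat apply Rmult_le_pos; lra. }
    replace (K * (exp (- (a / 4 * x)) * exp (- (a / 2 * x)) * exp (- (a / 4 * x)) * x ^ (k + m) * (exp (a / 4 * x) * exp (/ c))))
      with (K * exp (/ c) * (x ^ (k + m) * exp (- (a / 4 * x))) * exp (- (a / 2 * x))).
    2:{ transitivity (K * (exp (- (a / 4 * x)) * exp (a / 4 * x)) * exp (/ c) * (x ^ (k + m) * exp (- (a / 4 * x))) * exp (- (a / 2 * x))).
        rewrite Hexp. ring. ring. }
    apply Rmult_le_compat_r. lra. apply Rmult_le_compat_l. apply Rmult_le_pos; lra. auto.
  - apply (ex_series_le C (fun k => Rabs s ^ m * exp (/ c) * INR (fact m) * (8 / a) ^ m * ((8 * u / a) ^ k / INR (fact k)))).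
    + intro k. change (norm (C k)) with (Rabs (C k)). rewrite Rabs_pos_eq by auto.
      unfold C. rewrite !Rabs_mult, bc_abs, <- RPow_abs, (Rabs_pos_eq (u ^ k)) by (apply pow_le; auto).
      rewrite Nat.add_0_r.
      pose proof (fact_split k m).
      pose proof (fact_pos k). pose proof (fact_pos m). pose proof (exp_pos (/ c)).
      assert (Ha4 : 0 < (a / 4) ^ (k + m)) by (apply pow_lt; lra).
      assert (0 <= Rabs s ^ m) by (apply pow_le, Rabs_pos).
      assert (0 <= u ^ k) by (apply pow_le; auto).
      apply Rle_trans with (Rabs s ^ m * / (INR (fact k) * INR (fact k)) * u ^ k * exp (/ c) *
                             (2 ^ (k + m) * INR (fact k) * INR (fact m) / (a / 4) ^ (k + m))).
      { apply Rmult_le_compat_l. apply Rmult_le_pos; [|lra]. apply Rmult_le_pos; [|lra].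
        apply Rmult_le_pos; auto. left; apply Rinv_0_lt_compat, Rmult_lt_0_compat; lra.
        unfold Rdiv. apply Rmult_le_compat_r. left; apply Rinv_0_lt_compat; auto. auto. }
      right. replace 8 with (2 * 4) by ring. unfold Rdiv. rewrite !Rpow_mult_distr. rewrite <- !Rinv_pow by lra.
      rewrite !pow_add. field. repeat split; try lra; apply pow_nonzero; lra.
    + exact (ex_series_scal_l (Rabs s ^ m * exp (/ c) * INR (fact m) * (8 / a) ^ m) _ (ex_series_exp (8 * u / a))).
  - intro k. apply (is_RInt_gen_scal (fun x => exp (- (a * x)) * x ^ (k + m) * PSeries (bc (-1) m) (v * x)) (s ^ m * bc (-1) 0 k * u ^ k)).
    apply L2; lra.
  - intros x Hx.
    pose proof (is_series_scal_l (exp (- (a * x)) * (s ^ m * x ^ m * PSeries (bc (-1) m) (v * x))) _ _ (PS_series (bc (-1) 0) (u * x) Hrad0)) as H.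
    replace (exp (- (a * x)) * PSeries (bc (-1) 0) (u * x) * (s ^ m * x ^ m * PSeries (bc (-1) m) (v * x)))
      with (scal (exp (- (a * x)) * (s ^ m * x ^ m * PSeries (bc (-1) m) (v * x))) (PSeries (bc (-1) 0) (u * x))).
    2:{ unfold scal; simpl; unfold mult; simpl; ring. }
    eapply is_series_ext. 2: exact H.
    intro k. apply Rminus_diag_uniq. unfold scal; simpl; unfold mult; simpl. rewrite Rpow_mult_distr, !pow_add. ring.
  - intros b Hb. apply (@ex_RInt_continuous R_CompleteNormedModule). intros z _.
    apply (continuous_mult (fun x => exp (- (a * x)) * PSeries (bc (-1) 0) (u * x)) (fun x => s ^ m * x ^ m * PSeries (bc (-1) m) (v * x))).
    apply (continuous_mult (fun x => exp (- (a * x))) (fun x => PSeries (bc (-1) 0) (u * x))). apply cont_expa. apply cont_PSlin; auto.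
    apply (continuous_mult (fun x => s ^ m * x ^ m) (fun x => PSeries (bc (-1) m) (v * x))).
    apply (continuous_mult (fun _ => s ^ m) (fun x => x ^ m)). apply continuous_const. apply cont_pow.
    apply cont_PSlin; auto.
Qed.

Lemma is_series_sum_f (F : nat -> nat -> R) (L : nat -> R) N :
  (forall n, (n <= N)%nat -> is_series (F n) (L n)) ->
  is_series (fun t => sum_f_R0 (fun n => F n t) N) (sum_f_R0 L N).
Proof.
  intros H. induction N.
  - simpl. apply H. lia.
  - simpl. apply (is_series_plus (fun t => sum_f_R0 (fun n => F n t) N) (fun t => F (S N) t)).
    apply IHN. intros; apply H; lia. apply H; lia.
Qed.

Lemma is_series_finite (e : nat -> R) N :
  (forall i, (N < i)%nat -> e i = 0) -> is_series e (sum_f_R0 e N).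
Proof.
  intros H.
  assert (H2 : is_lim_seq (sum_n e) (sum_f_R0 e N)).
  { apply (is_lim_seq_ext_loc (fun _ => sum_f_R0 e N) (sum_n e)).
    - exists N. intros n Hn. rewrite sum_n_Reals. symmetry. apply sum_zero_tail; auto.
    - apply is_lim_seq_const. }
  exact H2.
Qed.

Lemma neg1_sq k : (-1) ^ k * (-1) ^ k = 1.
Proof. rewrite <- pow_add. replace (k + k)%nat with (2 * k)%nat by lia. apply pow_1_even. Qed.

Lemma abs_neg1 k : Rabs ((-1) ^ k) = 1.
Proof. rewrite <- RPow_abs. replace (Rabs (-1)) with 1 by (rewrite Rabs_left; lra). apply pow1. Qed.

Definition epsT (Y : R) (m t : nat) : R :=
  sum_f_R0 (fun i => Y ^ i / INR (fact i) * ((-1) ^ t * ((-1) ^ i * INR (binom m (t - i))))) t.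

Lemma V_series Y m X : Y <> 0 ->
  is_series (fun t => sum_f_R0 (fun n => (-1) ^ n * INR (binom m n) * (cP Y n t * X ^ t)) m) (V Y m 0 X).
Proof.
  intros HY. unfold V.
  apply (is_series_sum_f (fun n t => (-1) ^ n * INR (binom m n) * (cP Y n t * X ^ t))
                         (fun n => (-1) ^ n * INR (binom m n) * Pq Y (0 + n) X)).
  intros n _. simpl (0 + n)%nat.
  exact (is_series_scal_l ((-1) ^ n * INR (binom m n)) _ _ (PS_series (cP Y n) X (cP_radius Y n HY))).
Qed.

Lemma coef_eq Y m X t :
  sum_f_R0 (fun n => (-1) ^ n * INR (binom m n) * (cP Y n t * X ^ t)) m = X ^ t / INR (fact t) * epsT Y m t.
Proof.
  unfold epsT.
  set (g := fun i => Y ^ i / INR (fact i) * ((-1) ^ t * ((-1) ^ i * INR (binom m (t - i))))).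
  assert (H1 : sum_f_R0 g t = sum_f_R0 (fun n => if (n <=? t)%nat then g (t - n)%nat else 0) (m + t)).
  { rewrite (sum_zero_tail _ t (m + t)); try lia.
    2:{ intros n Hn. destruct (n <=? t)%nat eqn:E; auto. apply Nat.leb_le in E. lia. }
    rewrite <- sum_rev. apply sum_ext_R. intros n Hn.
    replace (n <=? t)%nat with true by (symmetry; apply Nat.leb_le; lia). reflexivity. }
  rewrite H1. rewrite <- sum_scal_R.
  rewrite <- (sum_zero_tail (fun n => (-1) ^ n * INR (binom m n) * (cP Y n t * X ^ t)) m (m + t)); try lia.
  2:{ intros n Hn. rewrite binom_gt by lia. simpl. ring. }
  apply sum_ext_R. intros n Hn.
  destruct (n <=? t)%nat eqn:E.
  - apply Nat.leb_le in E. unfold g, cP.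
    replace (t <? n)%nat with false by (symmetry; apply Nat.ltb_ge; lia).
    replace (t - (t - n))%nat with n by lia.
    replace ((-1) ^ t) with ((-1) ^ (t - n) * (-1) ^ n) by (rewrite <- pow_add; f_equal; lia).
    pose proof (neg1_sq (t - n)) as Hz.
    pose proof (fact_pos t). pose proof (fact_pos (t - n)).
    set (z := (-1) ^ (t - n)) in *.
    transitivity ((-1) ^ n * INR (binom m n) * (Y ^ (t - n) / (INR (fact (t - n)) * INR (fact t)) * X ^ t) * (z * z)).
    rewrite Hz; ring. field. lra.
  - apply Nat.leb_gt in E. unfold cP.
    replace (t <? n)%nat with true by (symmetry; apply Nat.ltb_lt; lia). ring.
Qed.

Definition gam (Y : R) (m k : nat) : R :=
  Series (fun j => (-Y) ^ j / INR (fact j) * INR (binom (k + j + m) k)).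

Lemma abs_term_bound (Y : R) (j p : nat) (B q : nat) : 0 <= Y -> (B <= p + j)%nat ->
  Rabs ((-Y) ^ j / INR (fact j) * INR (binom B q)) <= 2 ^ p * ((2 * Y) ^ j / INR (fact j)).
Proof.
  intros HY HB. rewrite Rabs_mult. rewrite Rabs_div by (apply Rgt_not_eq, fact_pos).
  rewrite <- RPow_abs, Rabs_Ropp, Rabs_pos_eq by auto.
  rewrite (Rabs_pos_eq (INR (fact j))) by (left; apply fact_pos).
  rewrite Rabs_pos_eq by apply pos_INR.
  pose proof (binom_le_pow B q).
  assert (2 ^ B <= 2 ^ (p + j)) by (apply Rle_pow; lra || lia).
  pose proof (fact_pos j). assert (0 <= Y ^ j) by (apply pow_le; auto).
  rewrite Rpow_mult_distr.
  apply Rle_trans with (Y ^ j / INR (fact j) * 2 ^ (p + j)).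
  apply Rmult_le_compat_l. apply Rdiv_le_0_compat; lra. lra.
  right. rewrite pow_add. field. lra.
Qed.

Lemma gam_ex Y m k : 0 <= Y -> ex_series (fun j => Rabs ((-Y) ^ j / INR (fact j) * INR (binom (k + j + m) k))).
Proof.
  intros HY. apply (ex_series_le (fun j => Rabs ((-Y) ^ j / INR (fact j) * INR (binom (k + j + m) k))) (fun j => 2 ^ (k + m) * ((2 * Y) ^ j / INR (fact j)))).
  - intro j. change (norm (Rabs ?z)) with (Rabs (Rabs z)). rewrite Rabs_Rabsolu.
    apply (abs_term_bound Y j (k + m) (k + j + m) k); auto. lia.
  - exact (ex_series_scal_l (2 ^ (k + m)) _ (ex_series_exp (2 * Y))).
Qed.

Lemma gam_bound Y m k : 0 <= Y -> Rabs (gam Y m k) <= 2 ^ (k + m) * exp (2 * Y).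
Proof.
  intros HY. unfold gam. eapply Rle_trans. apply Series_Rabs. apply gam_ex; auto.
  assert (Hb : is_series (fun j => 2 ^ (k + m) * ((2 * Y) ^ j / INR (fact j))) (2 ^ (k + m) * exp (2 * Y))).
  { exact (is_series_scal_l (2 ^ (k + m)) _ _ (is_series_exp (2 * Y))). }
  rewrite <- (is_series_unique _ _ Hb).
  apply Series_le. 2: eexists; eauto.
  intro j. split. apply Rabs_pos.
  apply (abs_term_bound Y j (k + m) (k + j + m) k); auto. lia.
Qed.

Lemma AS_binom2 t p : AS t (fun k => INR (binom (k + p) p)) = (-1) ^ t * INR (binom p t).
Proof.
  rewrite AS_binom. destruct (t <=? p)%nat eqn:E.
  - apply Nat.leb_le in E. f_equal. f_equal.
    pose proof (binom_sym t (p - t)) as Hs. replace (t + (p - t))%nat with p in Hs by lia.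
    rewrite Hs. reflexivity.
  - apply Nat.leb_gt in E. rewrite binom_gt by lia. simpl. ring.
Qed.

Lemma delta_eq Y m t : 0 <= Y ->
  sum_f_R0 (fun k => (-1) ^ k * INR (binom t k) * gam Y m k) t =
  Series (fun j => (-Y) ^ j / INR (fact j) * ((-1) ^ t * INR (binom (j + m) t))).
Proof.
  intros HY.
  assert (H : is_series (fun j => sum_f_R0 (fun k => (-1) ^ k * INR (binom t k) * ((-Y) ^ j / INR (fact j) * INR (binom (k + j + m) k))) t)
                        (sum_f_R0 (fun k => (-1) ^ k * INR (binom t k) * gam Y m k) t)).
  { apply (is_series_sum_f (fun k j => (-1) ^ k * INR (binom t k) * ((-Y) ^ j / INR (fact j) * INR (binom (k + j + m) k)))).
    intros k _. unfold gam.
    exact (is_series_scal_l ((-1) ^ k * INR (binom t k)) _ _ (Series_correct _ (ex_series_Rabs _ (gam_ex Y m k HY)))). }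
  rewrite <- (is_series_unique _ _ H). apply Series_ext. intro j.
  rewrite <- AS_binom2. unfold AS. rewrite <- sum_scal_R. apply sum_ext_R. intros k _.
  replace (k + j + m)%nat with (k + (j + m))%nat by lia. rewrite binom_sym. ring.
Qed.

Lemma deltaY Y m t : 0 <= Y ->
  Series (fun j => (-Y) ^ j / INR (fact j) * ((-1) ^ t * INR (binom (j + m) t))) * exp Y = epsT Y m t.
Proof.
  intros HY.
  set (a := fun j => (-Y) ^ j / INR (fact j) * ((-1) ^ t * INR (binom (j + m) t))).
  assert (Ha : ex_series (fun j => Rabs (a j))).
  { apply (ex_series_le (fun j => Rabs (a j)) (fun j => 2 ^ m * ((2 * Y) ^ j / INR (fact j)))).
    - intro j. change (norm (Rabs ?z)) with (Rabs (Rabs z)). rewrite Rabs_Rabsolu. unfold a.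
      replace ((-Y) ^ j / INR (fact j) * ((-1) ^ t * INR (binom (j + m) t))) with
        ((-1) ^ t * ((-Y) ^ j / INR (fact j) * INR (binom (j + m) t))) by ring.
      rewrite Rabs_mult, abs_neg1, Rmult_1_l.
      apply (abs_term_bound Y j m (j + m) t); auto. lia.
    - exact (ex_series_scal_l (2 ^ m) _ (ex_series_exp (2 * Y))). }
  assert (Hb : ex_series (fun l => Rabs (Y ^ l / INR (fact l)))).
  { apply (ex_series_ext (fun l => Y ^ l / INR (fact l))). intro l. symmetry. apply Rabs_pos_eq.
    apply Rdiv_le_0_compat. apply pow_le; auto. apply fact_pos. apply ex_series_exp. }
  pose proof (is_series_mult a (fun l => Y ^ l / INR (fact l)) (Series a) (exp Y)
               (Series_correct _ (ex_series_Rabs _ Ha)) (is_series_exp Y) Ha Hb) as HM.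
  set (e := fun i => Y ^ i / INR (fact i) * ((-1) ^ t * (if (i <=? t)%nat then (-1) ^ i * INR (binom m (t - i)) else 0))).
  assert (He : forall i, sum_f_R0 (fun k => a k * (Y ^ (i - k) / INR (fact (i - k)))) i = e i).
  { intro i. unfold e. rewrite <- AS_binom. unfold AS. rewrite <- !sum_scal_R.
    apply sum_ext_R. intros k Hk. unfold a.
    rewrite (binom_fact i k) by lia.
    replace ((-Y) ^ k) with ((-1) ^ k * Y ^ k) by (rewrite <- Rpow_mult_distr; f_equal; ring).
    replace (Y ^ i) with (Y ^ k * Y ^ (i - k)) by (rewrite <- pow_add; f_equal; lia).
    pose proof (fact_pos k). pose proof (fact_pos i). pose proof (fact_pos (i - k)).
    field. lra. }
  apply (is_series_ext _ e) in HM. 2: exact He.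
  pose proof (is_series_unique _ _ HM) as U1.
  rewrite (is_series_unique _ _ (is_series_finite e t ltac:(intros i Hi; unfold e; replace (i <=? t)%nat with false by (symmetry; apply Nat.leb_gt; lia); ring))) in U1.
  rewrite <- U1. unfold epsT, e. apply sum_ext_R. intros i Hi.
  replace (i <=? t)%nat with true by (symmetry; apply Nat.leb_le; lia). reflexivity.
Qed.

Lemma W_id X Y m : 0 <= X -> 0 < Y ->
  Series (fun k => (-X) ^ k / INR (fact k) * gam Y m k) = exp (- X) * exp (- Y) * V Y m 0 X.
Proof.
  intros HX HY.
  set (a := fun k => (-X) ^ k / INR (fact k) * gam Y m k).
  assert (Ha : ex_series (fun k => Rabs (a k))).
  { apply (ex_series_le (fun k => Rabs (a k)) (fun k => 2 ^ m * exp (2 * Y) * ((2 * X) ^ k / INR (fact k)))).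
    - intro k. change (norm (Rabs ?z)) with (Rabs (Rabs z)). rewrite Rabs_Rabsolu. unfold a.
      rewrite Rabs_mult, Rabs_div by (apply Rgt_not_eq, fact_pos).
      rewrite <- RPow_abs, Rabs_Ropp, Rabs_pos_eq by auto.
      rewrite (Rabs_pos_eq (INR (fact k))) by (left; apply fact_pos).
      pose proof (gam_bound Y m k ltac:(lra)). pose proof (fact_pos k).
      assert (0 <= X ^ k) by (apply pow_le; auto).
      apply Rle_trans with (X ^ k / INR (fact k) * (2 ^ (k + m) * exp (2 * Y))).
      apply Rmult_le_compat_l; auto. apply Rdiv_le_0_compat; lra.
      right. rewrite Rpow_mult_distr, pow_add. field. lra.
    - exact (ex_series_scal_l (2 ^ m * exp (2 * Y)) _ (ex_series_exp (2 * X))). }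
  assert (Hb : ex_series (fun l => Rabs (X ^ l / INR (fact l)))).
  { apply (ex_series_ext (fun l => X ^ l / INR (fact l))). intro l. symmetry. apply Rabs_pos_eq.
    apply Rdiv_le_0_compat. apply pow_le; auto. apply fact_pos. apply ex_series_exp. }
  pose proof (is_series_mult a (fun l => X ^ l / INR (fact l)) (Series a) (exp X)
               (Series_correct _ (ex_series_Rabs _ Ha)) (is_series_exp X) Ha Hb) as HM.
  assert (He : forall t, sum_f_R0 (fun k => a k * (X ^ (t - k) / INR (fact (t - k)))) t =
                         X ^ t / INR (fact t) * sum_f_R0 (fun k => (-1) ^ k * INR (binom t k) * gam Y m k) t).
  { intro t. rewrite <- sum_scal_R. apply sum_ext_R. intros k Hk. unfold a.
    rewrite (binom_fact t k) by lia.
    replace ((-X) ^ k) with ((-1) ^ k * X ^ k) by (rewrite <- Rpow_mult_distr; f_equal; ring).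
    replace (X ^ t) with (X ^ k * X ^ (t - k)) by (rewrite <- pow_add; f_equal; lia).
    pose proof (fact_pos k). pose proof (fact_pos t). pose proof (fact_pos (t - k)).
    field. lra. }
  apply (is_series_ext _ _ _ He) in HM.
  apply (is_series_scal_r (exp Y)) in HM.
  assert (He2 : forall t, X ^ t / INR (fact t) * sum_f_R0 (fun k => (-1) ^ k * INR (binom t k) * gam Y m k) t * exp Y
                          = sum_f_R0 (fun n => (-1) ^ n * INR (binom m n) * (cP Y n t * X ^ t)) m).
  { intro t. rewrite coef_eq. rewrite delta_eq by lra. rewrite <- deltaY by lra. ring. }
  apply (is_series_ext _ _ _ He2) in HM.
  pose proof (is_series_unique _ _ HM) as U1.
  rewrite (is_series_unique _ _ (V_series Y m X ltac:(lra))) in U1.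
  rewrite U1.
  replace (exp (- X) * exp (- Y) * (Series a * exp X * exp Y)) with
    (Series a * (exp (- X) * exp X) * (exp (- Y) * exp Y)) by ring.
  rewrite <- !exp_plus. replace (- X + X) with 0 by ring. replace (- Y + Y) with 0 by ring.
  rewrite exp_0. ring.
Qed.

Lemma bc_scale y k x : PSeries (bc y k) x = PSeries (bc 1 k) (y * x).
Proof.
  apply Series_ext. intro n. unfold bc. rewrite pow1, Rpow_mult_distr. unfold Rdiv. ring.
Qed.

Lemma f_eq (alpha beta2 : R) (m : nat) t : 0 < alpha -> 0 <= t ->
  exp (- t) * sqrt (t / alpha) ^ m * BesselI m (beta2 * sqrt (t / alpha)) =
  (beta2 / 2 / alpha) ^ m * (exp (- t) * Pq (beta2 ^ 2 / (4 * alpha)) (0 + m) t).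
Proof.
  intros Ha Ht. simpl (0 + m)%nat.
  rewrite BesselI_eq, P_eq, (bc_scale (beta2 ^ 2 / (4 * alpha)) m t).
  assert (Hs : sqrt (t / alpha) ^ 2 = t / alpha) by (apply pow2_sqrt; apply Rdiv_le_0_compat; lra).
  set (q := sqrt (t / alpha)) in *.
  replace ((beta2 * q / 2) ^ 2) with (beta2 ^ 2 / (4 * alpha) * t).
  2:{ replace ((beta2 * q / 2) ^ 2) with (beta2 ^ 2 * q ^ 2 / 4) by field.
      rewrite Hs. field. lra. }
  replace ((beta2 * q / 2) ^ m) with ((beta2 / 2) ^ m * q ^ m).
  2:{ rewrite <- Rpow_mult_distr. f_equal. field. }
  assert (Hm : q ^ m * q ^ m = (t / alpha) ^ m).
  { rewrite <- Rpow_mult_distr. f_equal. rewrite <- Hs. simpl. ring. }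
  replace ((beta2 / 2 / alpha) ^ m) with ((beta2 / 2) ^ m * (/ alpha) ^ m).
  2:{ rewrite <- Rpow_mult_distr. f_equal. }
  replace (t ^ m) with ((t / alpha) ^ m * alpha ^ m).
  2:{ rewrite <- Rpow_mult_distr. f_equal. field. lra. }
  replace ((/ alpha) ^ m) with (/ alpha ^ m) by (rewrite Rinv_pow; auto; lra).
  rewrite <- Hm. field. apply pow_nonzero. lra.
Qed.

Lemma D_val (alpha beta1 beta2 : R) (m : nat) : 0 < alpha -> 0 < beta1 -> 0 < beta2 ->
  Derive_n (fun x => exp (- x) * sqrt (x / alpha) ^ m * BesselI m (beta2 * sqrt (x / alpha)))
           m (beta1 ^ 2 / (4 * alpha)) =
  (beta2 / 2 / alpha) ^ m * (exp (- (beta1 ^ 2 / (4 * alpha))) *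
     V (beta2 ^ 2 / (4 * alpha)) m 0 (beta1 ^ 2 / (4 * alpha))).
Proof.
  intros Ha Hb1 Hb2.
  set (X := beta1 ^ 2 / (4 * alpha)). set (Y := beta2 ^ 2 / (4 * alpha)).
  assert (HX : 0 < X) by (unfold X; apply Rdiv_lt_0_compat; [apply pow_lt; lra| lra]).
  assert (HY : 0 < Y) by (unfold Y; apply Rdiv_lt_0_compat; [apply pow_lt; lra| lra]).
  rewrite (Derive_n_ext_loc _ (fun x => (beta2 / 2 / alpha) ^ m * (exp (- x) * Pq Y (0 + m) x))).
  - rewrite Derive_n_scal_l. f_equal. apply Derive_V. lra.
  - apply (locally_interval _ X 0 p_infty). simpl; auto. simpl; auto.
    intros y Hy _. simpl in Hy. apply f_eq; lra.
Qed.

Lemma P_bessel (alpha beta1 beta2 : R) n : 0 < alpha -> 0 < beta1 -> 0 < beta2 ->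
  (beta1 / beta2) ^ n * BesselI n (beta1 * beta2 / (2 * alpha)) =
  Pq (beta2 ^ 2 / (4 * alpha)) n (beta1 ^ 2 / (4 * alpha)).
Proof.
  intros Ha Hb1 Hb2.
  rewrite BesselI_eq, P_eq, (bc_scale (beta2 ^ 2 / (4 * alpha)) n).
  replace ((beta1 * beta2 / (2 * alpha) / 2) ^ 2) with (beta2 ^ 2 / (4 * alpha) * (beta1 ^ 2 / (4 * alpha))) by (field; lra).
  rewrite <- Rmult_assoc. f_equal. rewrite <- Rpow_mult_distr. f_equal. field. lra.
Qed.

Lemma val_eq a u v s m : 0 < a -> 0 <= u -> 0 < v ->
  Series (fun k => s ^ m * bc (-1) 0 k * u ^ k * L2val a v m k) =
  / a * (s / a) ^ m * (exp (- (u / a)) * exp (- (v / a)) * V (v / a) m 0 (u / a)).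
Proof.
  intros Ha Hu Hv.
  rewrite <- W_id. 2: apply Rdiv_le_0_compat; lra. 2: apply Rdiv_lt_0_compat; lra.
  rewrite <- Series_scal_l. apply Series_ext. intro k.
  unfold L2val, gam. rewrite <- !Series_scal_l. apply Series_ext. intro j.
  unfold bc. rewrite (binom_fact (k + j + m) k) by lia.
  replace (k + j + m - k)%nat with (j + m)%nat by lia.
  replace (k + m + j)%nat with (k + j + m)%nat by lia.
  rewrite Nat.add_0_r.
  replace ((- (u / a)) ^ k) with ((-1) ^ k * u ^ k / a ^ k).
  2:{ unfold Rdiv. rewrite <- Rpow_mult_distr, Rinv_pow by lra. rewrite <- Rpow_mult_distr. f_equal. ring. }
  replace ((- (v / a)) ^ j) with ((-1) ^ j * v ^ j / a ^ j).
  2:{ unfold Rdiv. rewrite <- Rpow_mult_distr, Rinv_pow by lra. rewrite <- Rpow_mult_distr. f_equal. ring. }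
  replace ((s / a) ^ m) with (s ^ m / a ^ m).
  2:{ unfold Rdiv. rewrite Rpow_mult_distr, Rinv_pow by lra. reflexivity. }
  replace (a ^ S (k + j + m)) with (a * a ^ k * a ^ j * a ^ m) by (simpl; rewrite !pow_add; ring).
  pose proof (fact_pos k). pose proof (fact_pos j). pose proof (fact_pos (j + m)). pose proof (fact_pos (k + j + m)).
  assert (a ^ k <> 0) by (apply pow_nonzero; lra).
  assert (a ^ j <> 0) by (apply pow_nonzero; lra).
  assert (a ^ m <> 0) by (apply pow_nonzero; lra).
  field. repeat split; lra.
Qed.

Lemma integrand_eq alpha beta1 beta2 m x : 0 < x ->
  exp (- (alpha * x)) * PSeries (bc (-1) 0) (beta1 ^ 2 / 4 * x) *
    ((beta2 / 2) ^ m * x ^ m * PSeries (bc (-1) m) (beta2 ^ 2 / 4 * x)) =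
  exp (- alpha * x) * BesselJ 0 (beta1 * sqrt x) * BesselJ m (beta2 * sqrt x) * sqrt x ^ m.
Proof.
  intros Hx. rewrite !BesselJ_eq.
  assert (Hs : sqrt x ^ 2 = x) by (apply pow2_sqrt; lra).
  set (q := sqrt x) in *.
  replace ((beta1 * q / 2) ^ 2) with (beta1 ^ 2 / 4 * x).
  2:{ replace ((beta1 * q / 2) ^ 2) with (beta1 ^ 2 * q ^ 2 / 4) by field. rewrite Hs. field. }
  replace ((beta2 * q / 2) ^ 2) with (beta2 ^ 2 / 4 * x).
  2:{ replace ((beta2 * q / 2) ^ 2) with (beta2 ^ 2 * q ^ 2 / 4) by field. rewrite Hs. field. }
  replace ((beta2 * q / 2) ^ m) with ((beta2 / 2) ^ m * q ^ m).
  2:{ rewrite <- Rpow_mult_distr. f_equal. field. }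
  assert (Hm : q ^ m * q ^ m = x ^ m).
  { rewrite <- Rpow_mult_distr. f_equal. rewrite <- Hs. simpl. ring. }
  rewrite <- Hm. rewrite Ropp_mult_distr_l. simpl (_ ^ 0). ring.
Qed.

Theorem mainTheorem15 (m : nat) (alpha beta1 beta2 : R) :
  (0 < m)%nat -> 0 < alpha -> 0 < beta1 -> 0 < beta2 ->
  let D := / alpha * exp (- beta2 ^ 2 / (4 * alpha)) *
           Derive_n (fun x => exp (- x) * sqrt (x / alpha) ^ m *
                              BesselI m (beta2 * sqrt (x / alpha)))
                    m (beta1 ^ 2 / (4 * alpha)) in
  is_RInt_gen (fun x => exp (- alpha * x) * BesselJ 0 (beta1 * sqrt x) *
                        BesselJ m (beta2 * sqrt x) * sqrt x ^ m)
              (at_point 0) (Rbar_locally p_infty) D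
  /\
  D = / alpha * (beta2 / (2 * alpha)) ^ m *
      exp (- (beta1 ^ 2 + beta2 ^ 2) / (4 * alpha)) *
      sum_f_R0 (fun n => (-1) ^ n * Binomial.C m n * (beta1 / beta2) ^ n *
                         BesselI n (beta1 * beta2 / (2 * alpha))) m.
Proof.
  intros Hm Ha Hb1 Hb2 D.
  assert (HD : D = / alpha * (beta2 / 2 / alpha) ^ m *
     (exp (- (beta1 ^ 2 / (4 * alpha))) * exp (- (beta2 ^ 2 / (4 * alpha))) *
      V (beta2 ^ 2 / (4 * alpha)) m 0 (beta1 ^ 2 / (4 * alpha)))).
  { unfold D. rewrite D_val; auto.
    replace (- beta2 ^ 2 / (4 * alpha)) with (- (beta2 ^ 2 / (4 * alpha))) by (field; lra). ring. }
  split.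
  - rewrite HD.
    pose proof (L1 alpha (beta1 ^ 2 / 4) (beta2 ^ 2 / 4) (beta2 / 2) m Ha
                  ltac:(apply Rdiv_le_0_compat; [apply pow_le; lra | lra])
                  ltac:(apply Rdiv_lt_0_compat; [apply pow_lt; lra | lra])) as HL.
    rewrite val_eq in HL; try lra.
    2: apply Rdiv_le_0_compat; [apply pow_le; lra | lra].
    2: apply Rdiv_lt_0_compat; [apply pow_lt; lra | lra].
    replace (beta1 ^ 2 / 4 / alpha) with (beta1 ^ 2 / (4 * alpha)) in HL by (field; lra).
    replace (beta2 ^ 2 / 4 / alpha) with (beta2 ^ 2 / (4 * alpha)) in HL by (field; lra).
    eapply is_RInt_gen_ext. 2: exact HL.
    apply (Filter_prod _ _ _ (fun a => a = 0) (fun b => 0 < b)).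
    + reflexivity.
    + exists 0. auto.
    + intros x y -> Hy z Hz. simpl in Hz.
      rewrite Rmin_left, Rmax_right in Hz by lra.
      apply integrand_eq. lra.
  - rewrite HD. unfold V.
    replace (- (beta1 ^ 2 + beta2 ^ 2) / (4 * alpha)) with
      (- (beta1 ^ 2 / (4 * alpha)) + - (beta2 ^ 2 / (4 * alpha))) by (field; lra).
    rewrite exp_plus.
    replace (beta2 / (2 * alpha)) with (beta2 / 2 / alpha) by (field; lra).
    rewrite (sum_ext_R (fun n => (-1) ^ n * INR (binom m n) * Pq (beta2 ^ 2 / (4 * alpha)) (0 + n) (beta1 ^ 2 / (4 * alpha)))
                        (fun n => (-1) ^ n * Binomial.C m n * (beta1 / beta2) ^ n * BesselI n (beta1 * beta2 / (2 * alpha))) m).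
    + ring.
    + intros n Hn. rewrite binom_C by auto. simpl (0 + n)%nat. rewrite <- P_bessel; auto. ring.
Qed.
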